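(* Let $q$ be a prime power and $n\ge1$ with $q^n>2$. Let $\beta,\gamma\in\mathbb{F}_q$ with $\beta\neq-\gamma$, and let $f(x)\neq x-1$ be a primitive polynomial of degree $n$ over $\mathbb{F}_q$. Set $h(x)=f\big((\beta+\gamma)x+1\big)$ and $h^*(x)=x^n h(1/x)$. Then the polynomial $$F(x)=\frac{(x-\gamma)^n\, f\!\left(\dfrac{x^{q^n}+\beta}{x-\gamma}\right)}{h^*(x-\gamma)}$$ is an irreducible polynomial of degree $n(q^n-1)$ over $\mathbb{F}_q$.
   Context: A primitive polynomial of degree $n$ over $\mathbb{F}_q$ is a monic irreducible polynomial of degree $n$ whose roots generate the multiplicative group $\mathbb{F}_{q^n}^*$. *)

(* Defs.v *)
From HB Require Import structures.
From mathcomp Require Import all_boot all_order all_algebra all_field.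
From mathcomp Require Import qfpoly.
Set Implicit Arguments. Unset Strict Implicit. Unset Printing Implicit Defensive.
Import GRing.Theory.
Local Open Scope ring_scope.

(* "primitive polynomial": we use MathComp's own notion
   qfpoly.primitive_poly (monic, irreducible, and X has multiplicative order
   exactly q^n - 1 = #|F[X]/(p)| - 1 modulo p, i.e. the root X generates the
   multiplicative group of F[X]/(p) = F_{q^n}). The degree is fixed separately. *)

(* reciprocal polynomial of degree n: p^*(x) = x^n p(1/x) *)
Definition recip (F : fieldType) (n : nat) (p : {poly F}) : {poly F} :=
  \sum_(i < n.+1) p`_i *: 'X^(n - i).

Definition hpoly (F : fieldType) (beta gamma : F) (f : {poly F}) : {poly F} :=
  f \Po ((beta + gamma) *: 'X + 1).

(* numerator (x - gamma)^n f((x^Q + beta)/(x - gamma)), with Q = q^n,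
   written as the polynomial sum_i f_i (x^Q + beta)^i (x - gamma)^(n-i) *)
Definition Fnum (F : fieldType) (n Q : nat) (beta gamma : F) (f : {poly F})
  : {poly F} :=
  \sum_(i < n.+1) f`_i *: (('X^Q + beta%:P) ^+ i * ('X - gamma%:P) ^+ (n - i)).

Definition Fden (F : fieldType) (n : nat) (beta gamma : F) (f : {poly F})
  : {poly F} :=
  recip n (hpoly beta gamma f) \Po ('X - gamma%:P).

(* Main.v *)
From HB Require Import structures.
From mathcomp Require Import all_boot all_order all_algebra all_field.
From mathcomp Require Import qfpoly.
Require Import Defs.
Set Implicit Arguments. Unset Strict Implicit. Unset Printing Implicit Defensive.
Import GRing.Theory.
Local Open Scope ring_scope.

Section Prelim.
Variable F : finFieldType.
Local Notation q := #|F|.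

Lemma pnat_card : [pchar F].-nat q.
Proof.
have [p pr pc] := finPcharP F.
rewrite (eq_pnat _ (pcharf_eq pc)) -cardsT.
exact: abelian.abelem_pgroup (abelian.fin_ring_pchar_abelem pc).
Qed.

Lemma q_gt1 : (1 < q)%N.
Proof. exact: finNzRing_gt1. Qed.

Lemma natr_card0 : (q%:R : F) = 0.
Proof.
have hc : pdiv q \in [pchar F] by apply: (pnatPpi pnat_card); rewrite pi_pdiv q_gt1.
by apply/eqP; rewrite -(dvdn_pcharf hc) pdiv_dvd.
Qed.

Lemma natr_cardX0 k : (0 < k)%N -> ((q ^ k)%N%:R : {poly F}) = 0.
Proof.
move=> k0; rewrite -polyC_natr natrX natr_card0 expr0n.
by rewrite -(prednK k0).
Qed.

Section Frob.
Variable R : comNzRingType.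
Hypothesis hc : [pchar R] =i [pchar F].

Lemma pnatR k : [pchar R].-nat (q ^ k)%N.
Proof. by rewrite (eq_pnat _ hc) pnatX pnat_card. Qed.

Lemma frobD k (a b : R) : (a + b) ^+ (q ^ k)%N = a ^+ (q ^ k)%N + b ^+ (q ^ k)%N.
Proof. exact: exprDn_pchar (pnatR k). Qed.

Lemma frobN k (a : R) : (- a) ^+ (q ^ k)%N = - a ^+ (q ^ k)%N.
Proof. exact: exprNn_pchar (pnatR k). Qed.

Lemma frobB k (a b : R) : (a - b) ^+ (q ^ k)%N = a ^+ (q ^ k)%N - b ^+ (q ^ k)%N.
Proof. by rewrite frobD frobN. Qed.
End Frob.

Lemma expF_cardX k (c : F) : c ^+ (q ^ k)%N = c.
Proof.
elim: k => [|k IH]; first by rewrite expn0 expr1.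
by rewrite expnSr exprM IH expf_card.
Qed.

Lemma rmorph_cardX (R : nzRingType) (iota : {rmorphism F -> R}) k c :
  iota c ^+ (q ^ k)%N = iota c.
Proof. by rewrite -rmorphXn expF_cardX. Qed.

End Prelim.

Lemma homog (K : fieldType) (p : {poly K}) n a c : (size p <= n.+1)%N -> c != 0 ->
  \sum_(i < n.+1) p`_i * a ^+ i * c ^+ (n - i) = c ^+ n * p.[a / c].
Proof.
move=> sp c0; rewrite (horner_coef_wide _ sp) mulr_sumr; apply: eq_bigr => i _.
have hi : (i <= n)%N by rewrite -ltnS.
have -> : c ^+ n = c ^+ (n - i) * c ^+ i by rewrite -exprD subnK.
rewrite exprMn exprVn.
have ci : c ^+ i != 0 by rewrite expf_neq0.
have e : c ^+ i * (p`_i * (a ^+ i * (c ^+ i)^-1)) = p`_i * a ^+ i.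
  by rewrite mulrCA [c ^+ i * _]mulrC -mulrA mulVf // mulr1.
by rewrite -[RHS]mulrA e mulrC.
Qed.

Definition Hh (F : fieldType) (f P C : {poly F}) n :=
  \sum_(i < n.+1) f`_i *: (P ^+ i * C ^+ (n - i)).

Section Eval.
Variables (F : fieldType) (K : fieldType) (psi : {rmorphism {poly F} -> K}).
Local Notation iota := (psi \o polyC).

Lemma psi_scale c p : psi (c *: p) = iota c * psi p.
Proof. by rewrite -mul_polyC rmorphM. Qed.

Lemma psi_comp P R : psi (P \Po R) = (map_poly iota P).[psi R].
Proof.
rewrite comp_polyE rmorph_sum (horner_coef_wide _ (_ : size _ <= size P)%N).
  by apply: eq_bigr => i _; rewrite psi_scale rmorphXn coef_map.
by rewrite size_map_poly.
Qed.

Lemma psi_horner P : psi P = (map_poly iota P).[psi 'X].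
Proof. by rewrite -psi_comp comp_polyXr. Qed.

Lemma psi_H (f P C : {poly F}) n : (size f <= n.+1)%N -> psi C != 0 ->
  psi (Hh f P C n) = psi C ^+ n * (map_poly iota f).[psi P / psi C].
Proof.
move=> sf c0; rewrite -homog ?size_map_poly //.
rewrite /Hh rmorph_sum; apply: eq_bigr => i _.
by rewrite psi_scale rmorphM !rmorphXn coef_map /= mulrA.
Qed.

Lemma psi_H_C0 (f P C : {poly F}) n : psi C = 0 ->
  psi (Hh f P C n) = iota f`_n * psi P ^+ n.
Proof.
move=> c0; rewrite /Hh rmorph_sum big_ord_recr /= big1 ?add0r.
  by rewrite psi_scale rmorphM subnn expr0 rmorph1 mulr1 rmorphXn.
move=> i _; rewrite psi_scale rmorphM rmorphXn [psi (C ^+ _)]rmorphXn c0 expr0n.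
by rewrite subn_eq0 leqNgt ltn_ord /= !mulr0.
Qed.

Lemma psi_Fden beta gamma (f : {poly F}) n : (size f <= n.+1)%N ->
  psi ('X - gamma%:P) != 0 ->
  psi (Fden n beta gamma f) = psi ('X - gamma%:P) ^+ n *
    (map_poly iota f).[psi ('X + beta%:P) / psi ('X - gamma%:P)].
Proof.
move=> sf; set c := psi ('X - gamma%:P) => c0.
rewrite /Fden psi_comp -/c /recip rmorph_sum horner_sum.
have sh : (size (map_poly iota (hpoly beta gamma f)) <= n.+1)%N.
  rewrite size_map_poly /hpoly (leq_trans (size_comp_poly_leq _ _)) // ltnS.
  have h1 : ((size f).-1 <= n)%N by rewrite -subn1 leq_subLR add1n.
  have h2 : ((size ((beta + gamma) *: 'X + 1 : {poly F})%R).-1 <= 1)%N.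
    rewrite -subn1 leq_subLR; apply: leq_trans (size_polyD _ _) _.
    by rewrite geq_max size_polyC (leq_trans (size_scale_leq _ _)) ?size_polyX //; case: (_ != _).
  by apply: leq_trans (leq_mul h1 h2) _; rewrite muln1.
rewrite (eq_bigr (fun i : 'I_n.+1 => (map_poly iota (hpoly beta gamma f))`_i * 1 ^+ i * c ^+ (n - i))); last first.
  move=> i _; rewrite /= map_polyZ map_polyXn hornerZ hornerXn coef_map expr1n mulr1 //.
rewrite (homog _ sh c0); congr (_ * _).
rewrite /hpoly map_comp_poly horner_comp; congr (_.[_]).
rewrite rmorphD /= map_polyZ map_polyX rmorph1 !hornerE.
have -> : psi ('X + beta%:P) = c + iota (beta + gamma).
  by rewrite /c /= -rmorphD polyCD addrA addrAC subrK.
by rewrite mulrDl divff // /= mulr1 addrC.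
Qed.

End Eval.

Lemma Fden_Hh (F : fieldType) (beta gamma : F) (f : {poly F}) n :
  (size f <= n.+1)%N ->
  Fden n beta gamma f = Hh f ('X + beta%:P) ('X - gamma%:P) n.
Proof.
move=> sf.
pose psi : {rmorphism {poly F} -> {fraction {poly F}}} := @FracField.tofrac _.
have c0 : psi ('X - gamma%:P) != 0 by rewrite /psi tofrac_eq0 polyXsubC_eq0.
apply/eqP; rewrite -(tofrac_eq (R := {poly F})) -/(psi _) -/(psi _).
by rewrite psi_Fden // psi_H.
Qed.

Section QEv.
Variables (F : finFieldType) (g : {poly F}) (hI : monic_irreducible_poly g).
Definition qev : {poly F} -> {poly %/ g with hI} := in_qpoly g.
HB.instance Definition _ := GRing.RMorphism.copy qev (in_qpoly g).

Lemma qev_eq0 p : (qev p == 0) = (g %| p).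
Proof.
have hM : g \is monic by case: hI.
apply/eqP/idP => [/val_eqP /= | hDp].
  by rewrite -Pdiv.IdomainMonic.modpE mk_monicE.
by apply/val_eqP; rewrite /= -Pdiv.IdomainMonic.modpE mk_monicE.
Qed.

Lemma qev_char : [pchar {poly %/ g with hI}] =i [pchar F].
Proof. exact: pchar_lalg. Qed.

Lemma qev_frob (u : {poly %/ g with hI}) : u ^+ (#|F| ^ (size g).-1)%N = u.
Proof. by rewrite -card_qfpoly expf_card. Qed.
End QEv.

Lemma dvdp_root (F K : fieldType) (iota : {rmorphism F -> K}) (f P : {poly F}) u :
  (map_poly iota f).[u] = 0 -> f %| P -> (map_poly iota P).[u] = 0.
Proof. by move=> fu /dvdpP [r ->]; rewrite rmorphM hornerM fu mulr0. Qed.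

Lemma root_dvd (F K : fieldType) (iota : {rmorphism F -> K}) (f P : {poly F}) u :
  irreducible_poly f -> (map_poly iota f).[u] = 0 -> (map_poly iota P).[u] = 0 ->
  f %| P.
Proof.
move=> fI fu Pu; apply: contraT; rewrite -irreducible_poly_coprime //.
case/Bezout_coprimepP => [[a b] /= H].
have /size_poly1P [c c0 ec] : size (a * f + b * P) == 1.
  by rewrite (eqp_size H) size_poly1.
have := congr1 (fun p => (map_poly iota p).[u]) ec.
rewrite /= rmorphD !rmorphM hornerD !hornerM fu Pu !mulr0 addr0 map_polyC hornerC.
by move/esym/eqP; rewrite fmorph_eq0 (negPf c0).
Qed.

Section PrimRoot.
Variables (F : finFieldType) (K : fieldType) (iota : {rmorphism F -> K}).
Variables (n : nat) (f : {poly F}).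
Hypotheses (n1 : (1 <= n)%N) (Q2 : (2 < #|F| ^ n)%N) (sf : size f = n.+1)
  (pf : primitive_poly f) (fX1 : f != 'X - 1).
Local Notation Q := (#|F| ^ n)%N.
Variable u : K.
Hypothesis fu : (map_poly iota f).[u] = 0.

Lemma prim_mi : monic_irreducible_poly f.
Proof. by case/primitive_polyP: pf. Qed.

Lemma prim_v : (#|{poly %/ f}|.-1 = Q - 1)%N.
Proof.
have [fI fM] := prim_mi.
by rewrite card_monic_qpoly ?sf // subn1.
Qed.

Lemma prim_dvd : f %| 'X^(Q - 1) - 1.
Proof. by case/primitive_polyP: pf; rewrite prim_v. Qed.

Lemma prim_ndvd k : (0 < k < Q - 1)%N -> ~~ (f %| 'X^k - 1).
Proof. by case/primitive_polyP: pf => _ _; rewrite prim_v; apply. Qed.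

Lemma map_XnB1 k : (map_poly iota ('X^k - 1)).[u] = u ^+ k - 1.
Proof. by rewrite rmorphB /= map_polyXn rmorph1 hornerD hornerN hornerXn hornerE. Qed.

Lemma root_expQ1 : u ^+ (Q - 1) = 1.
Proof.
by apply/eqP; rewrite -subr_eq0 -map_XnB1 (dvdp_root fu prim_dvd).
Qed.

Lemma root_neq0 : u != 0.
Proof.
apply/eqP=> u0; have := root_expQ1; rewrite u0 expr0n.
have -> : (Q - 1 == 0)%N = false by rewrite subn_eq0 leqNgt (leq_trans _ Q2).
by move/eqP; rewrite eq_sym oner_eq0.
Qed.

Lemma root_expQ : u ^+ Q = u.
Proof.
have Q1 : (0 < Q)%N by apply: leq_trans Q2.
by rewrite -(subnK Q1) addn1 exprS root_expQ1 mulr1.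
Qed.

Lemma root_neq1 : u != 1.
Proof.
apply/eqP=> u1.
have h : f %| 'X^1 - 1.
  by apply: (root_dvd (fst prim_mi) fu); rewrite map_XnB1 u1 expr1n subrr.
have s2 : size ('X^1 - 1 : {poly F}) = 2%N by rewrite expr1 size_XsubC.
have sfle : (size f <= 2)%N.
  rewrite -s2; apply: dvdp_leq h; by rewrite -size_poly_eq0 s2.
have : f %= 'X^1 - 1.
  rewrite -dvdp_size_eqp // s2 sf; rewrite sf ltnS in sfle.
  by rewrite eqSS eqn_leq sfle n1.
rewrite eqp_monic ?(snd prim_mi) ?expr1 ?monicXsubC //.
by rewrite (negPf fX1).
Qed.

Lemma root_ord k : u ^+ k = 1 -> (Q - 1 %| k)%N.
Proof.
move=> uk; set v := (Q - 1)%N.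
have v0 : (0 < v)%N by rewrite subn_gt0 (leq_trans _ Q2).
have uk' : u ^+ (k %% v) = 1.
  by move: uk; rewrite {1}(divn_eq k v) exprD mulnC exprM root_expQ1 expr1n mul1r.
apply: contraT; rewrite /dvdn => kv.
have : (0 < k %% v < v)%N by rewrite lt0n kv ltn_pmod.
move/prim_ndvd/negP => H; exfalso; apply: H.
by apply: (root_dvd (fst prim_mi) fu); rewrite map_XnB1 uk' subrr.
Qed.

Lemma root_deriv : (map_poly iota f)^`().[u] != 0.
Proof.
have /dvdpP [r hr] := prim_dvd.
have Q1 : (0 < Q)%N by apply: leq_trans Q2.
have e : 'X^Q - 'X = ('X * r) * f.
  by rewrite -mulrA -hr mulrBr mulr1 -exprS subn1 prednK.
have d : ('X^Q - 'X : {poly F})^`() = -1.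
  by rewrite derivB derivXn derivX -mulr_natr natr_cardX0 // mulr0 sub0r.
have := congr1 (fun p => (map_poly iota p^`()).[u]) e.
rewrite /= d derivM rmorphD !rmorphM hornerD !hornerM /= -deriv_map fu mulr0 add0r.
rewrite rmorphN rmorph1 hornerN hornerC => h; apply/eqP => h0.
by move: h; rewrite deriv_map in h0; rewrite h0 mulr0 => /eqP; rewrite oppr_eq0 oner_eq0.
Qed.

End PrimRoot.

Lemma dvd_expsub1 (q n d : nat) : (1 < q)%N -> (2 < q ^ n)%N -> (0 < n)%N ->
  (q ^ n - 1 %| q ^ d - 1)%N -> (n %| d)%N.
Proof.
move=> q1 Q2 n0 hd; set Q := (q ^ n)%N in Q2 hd.
have q0 : (0 < q)%N by apply: ltnW.
set r := (d %% n)%N; set m := (d %/ n)%N.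
have ed : (q ^ d = q ^ r * Q ^ m)%N.
  by rewrite /Q -expnM -expnD {1}(divn_eq d n) addnC mulnC.
have h1 : (q ^ d == 1 %[mod Q - 1])%N.
  by rewrite eqn_mod_dvd ?expn_gt0 ?q0.
have eQ : (Q = 1 %[mod Q - 1])%N.
  by rewrite -{1}(subnK (ltnW (ltnW Q2))) modnDl.
have h2 : (q ^ r = 1 %[mod Q - 1])%N.
  by rewrite -[RHS](eqP h1) ed -modnMmr -(modnXm m) eQ modnXm exp1n modnMmr muln1.
have rn : (r < n)%N by rewrite ltn_mod.
have hr : (q ^ r < Q - 1)%N.
  have a : (q ^ r * q <= Q)%N by rewrite -expnSr leq_pexp2l.
  have b : (q ^ r * 2 <= q ^ r * q)%N by rewrite leq_mul2l q1 orbT.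
  rewrite ltn_subRL addnC.
  have [e1|ne1] := eqVneq (q ^ r)%N 1%N; first by rewrite e1.
  have c : (1 < q ^ r)%N by rewrite ltn_neqAle eq_sym ne1 expn_gt0 q0.
  apply: leq_trans (leq_trans b a); by rewrite muln2 -addnn ltn_add2l.
move: h2; rewrite !modn_small ?(leq_trans _ hr) //; last first.
  by rewrite ltnS expn_gt0 q0.
move=> e; rewrite /dvdn -/r; apply/negPn/negP => rn0.
have : (q ^ 1 <= q ^ r)%N by rewrite leq_pexp2l // lt0n.
by rewrite e expn1 leqNgt q1.
Qed.

Section KRoot.
Variables (F : finFieldType) (n : nat) (beta gamma : F) (f : {poly F}).
Hypotheses (n1 : (1 <= n)%N) (Q2 : (2 < #|F| ^ n)%N) (bg : beta != - gamma)
  (sf : size f = n.+1) (pf : primitive_poly f) (fX1 : f != 'X - 1).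
Variables (g : {poly F}) (hI : monic_irreducible_poly g).
Local Notation K := {poly %/ g with hI}.
Local Notation psi := (qev hI).
Local Notation iota := (qev hI \o polyC).
Local Notation Q := (#|F| ^ n)%N.
Local Notation w := (psi 'X).
Local Notation C := ('X - gamma%:P).

Lemma fmon : f`_n = 1.
Proof.
have [_ fM] := prim_mi pf.
by move/monicP: fM; rewrite lead_coefE sf.
Qed.

Lemma psiC0 c : psi c%:P = iota c. Proof. by []. Qed.

Lemma psiXsubC : psi C = w - iota gamma.
Proof. by rewrite rmorphB. Qed.

Lemma KfrobD k (a b : K) : (a + b) ^+ (#|F| ^ k) = a ^+ (#|F| ^ k) + b ^+ (#|F| ^ k).
Proof. exact: frobD (qev_char hI) k a b. Qed.

Lemma KfrobB k (a b : K) : (a - b) ^+ (#|F| ^ k) = a ^+ (#|F| ^ k) - b ^+ (#|F| ^ k).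
Proof. exact: frobB (qev_char hI) k a b. Qed.

Lemma Kconst k c : iota c ^+ (#|F| ^ k) = iota c.
Proof. exact: rmorph_cardX. Qed.

Lemma psiC_neq0 N P : psi P = w ^+ (#|F| ^ N) + iota beta ->
  psi (Hh f P C n) = 0 -> psi C != 0.
Proof.
move=> eP h0; apply/eqP => c0; move: h0; rewrite psi_H_C0 // fmon /= polyC1 rmorph1 mul1r eP.
move: c0; rewrite psiXsubC => /eqP; rewrite subr_eq0 => /eqP ->; rewrite Kconst.
move/eqP; rewrite expf_eq0 -rmorphD fmorph_eq0 addrC addr_eq0 (negPf bg).
by rewrite andbF.
Qed.

Lemma y_root P : psi C != 0 -> psi (Hh f P C n) = 0 ->
  (map_poly iota f).[psi P / psi C] = 0.
Proof.
move=> c0; rewrite psi_H ?sf // => /eqP; rewrite mulf_eq0 expf_eq0 (negPf c0) andbF /=.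
by move/eqP.
Qed.

Lemma n_dvd (u : K) : (map_poly iota f).[u] = 0 -> (n %| (size g).-1)%N.
Proof.
move=> fu.
have u0 := root_neq0 n1 Q2 sf pf fu.
have h : u ^+ (#|F| ^ (size g).-1 - 1) = 1.
  apply: (mulIf u0); rewrite mul1r -exprSr subn1 prednK ?qev_frob //.
  by rewrite expn_gt0 (ltnW (q_gt1 F)).
apply: (dvd_expsub1 (q_gt1 F) Q2 n1).
exact: (root_ord n1 Q2 sf pf fu h).
Qed.

Definition x0 (y : K) := (iota beta + iota gamma * y) / (y - 1).

Lemma x0_frob (y : K) : y ^+ Q = y -> y != 1 -> x0 y ^+ Q = x0 y.
Proof.
move=> yQ y1; rewrite /x0 exprMn exprVn KfrobD KfrobB exprMn !Kconst yQ.
by rewrite expr1n.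
Qed.

Lemma x0_eq (y : K) : y != 1 -> x0 y * (y - 1) = iota beta + iota gamma * y.
Proof. by move=> y1; rewrite /x0 divfK // subr_eq0. Qed.

Lemma w_x0 (y : K) : psi C != 0 -> y = psi ('X + beta%:P) / psi C -> y != 1 ->
  w = x0 y.
Proof.
move=> c0 ey y1; have y10 : y - 1 != 0 by rewrite subr_eq0.
apply: (mulIf y10); rewrite x0_eq //.
have e : y * (w - iota gamma) = w + iota beta.
  by rewrite ey -psiXsubC divfK // rmorphD.
have e' : y * w = w + iota beta + y * iota gamma.
  by rewrite -e mulrBr subrK.
rewrite mulrBr mulr1 [w * y]mulrC e'.
by rewrite addrAC [w + _]addrC addrK [y * _]mulrC.
Qed.

Lemma Fden_part : g %| Fden n beta gamma f ->
  (n.+1 <= size g)%N /\ g %| 'X^Q - 'X.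
Proof.
move=> gD.
have h0 : psi (Hh f ('X + beta%:P) C n) = 0.
  by apply/eqP; rewrite -Fden_Hh ?sf // qev_eq0.
have eP : psi ('X + beta%:P) = w ^+ (#|F| ^ 0) + iota beta.
  by rewrite expn0 expr1 rmorphD.
have c0 := psiC_neq0 eP h0.
set y := psi ('X + beta%:P) / psi C.
have fy := y_root c0 h0.
split.
  have := n_dvd fy; have [[sg _] _] := hI.
  move=> nd; have d0 : (0 < (size g).-1)%N by rewrite -subn1 subn_gt0.
  by rewrite -(prednK (ltnW sg)) ltnS (dvdn_leq d0 nd).
have hw := w_x0 c0 (erefl y) (root_neq1 n1 sf pf fX1 fy).
rewrite -qev_eq0 rmorphB rmorphXn /= hw.
by rewrite x0_frob ?subrr ?(root_expQ n1 Q2 sf pf fy) ?(root_neq1 n1 sf pf fX1 fy).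
Qed.

End KRoot.

From Stdlib Require Import Classical.

Lemma eqp_irr (F : fieldType) (p r : {poly F}) :
  irreducible_poly p -> p %= r -> irreducible_poly r.
Proof.
move=> [sp ip] hpr; split; first by rewrite -(eqp_size hpr).
move=> s s1 sr; apply: (eqp_trans (ip _ s1 _) hpr).
by rewrite (eqp_dvdr _ hpr).
Qed.

Lemma exists_irr_factor (F : fieldType) (p : {poly F}) :
  (1 < size p)%N -> exists g, monic_irreducible_poly g /\ g %| p.
Proof.
move: {2}(size p) (leqnn (size p)) => m; elim: m p => [|m IH] p sp p1.
  by move: (leq_trans p1 sp).
case: (classic (irreducible_poly p)) => [pI | pNI].
  have l0 : lead_coef p != 0 by rewrite lead_coef_eq0 -size_poly_gt0 ltnW.
  exists ((lead_coef p)^-1 *: p); split; last by rewrite dvdpZl ?invr_eq0.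
  split; last by rewrite monicE lead_coefZ mulVf.
  by apply: eqp_irr pI _; rewrite eqp_sym eqp_scale ?invr_eq0.
have [s [s1 sp' nsp]] : exists s : {poly F}, [/\ size s != 1%N, s %| p & ~~ (s %= p)].
  apply: NNPP => H; apply: pNI; split => // s s1 sd.
  by apply: contraT => H2; exfalso; apply: H; exists s; split.
have p0 : p != 0 by rewrite -size_poly_gt0 ltnW.
have s0 : s != 0 by apply: contraNneq p0 => e; rewrite -dvd0p -e.
have ss : (size s < size p)%N.
  by rewrite ltn_neqAle (dvdp_leq p0 sp') andbT dvdp_size_eqp.
have s2 : (1 < size s)%N by rewrite ltn_neqAle eq_sym s1 size_poly_gt0 s0.
have sm : (size s <= m)%N by rewrite -ltnS (leq_trans ss sp).
have [g [gI gs]] := IH s sm s2.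
by exists g; split => //; apply: dvdp_trans gs sp'.
Qed.

Section Top.
Variables (F : finFieldType) (n : nat) (beta gamma : F) (f : {poly F}).
Hypotheses (n1 : (1 <= n)%N) (Q2 : (2 < #|F| ^ n)%N) (bg : beta != - gamma)
  (sf : size f = n.+1) (pf : primitive_poly f) (fX1 : f != 'X - 1).
Local Notation Q := (#|F| ^ n)%N.
Local Notation A := ('X^Q + beta%:P).
Local Notation B := ('X + beta%:P).
Local Notation C := ('X - gamma%:P).

Lemma B_eq : B = 'X - (- beta)%:P.
Proof. by rewrite polyCN opprK. Qed.

Lemma term_props i : (i <= n)%N ->
  size (B ^+ i * C ^+ (n - i)) = n.+1 /\ (B ^+ i * C ^+ (n - i)) \is monic.
Proof.
move=> hi; split; last by rewrite monicMl ?monic_exp ?monicXsubC ?monicXaddC.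
rewrite size_Mmonic ?monic_exp ?monicXsubC // ?B_eq ?size_exp_XsubC.
  by rewrite addSn addnS /= subnKC.
by rewrite -size_poly_gt0 size_exp_XsubC.
Qed.

Lemma f1_neq0 : f.[1] != 0.
Proof.
apply/negP => /eqP f1.
have h : 'X - 1%:P %| f by rewrite dvdp_XsubCl /root f1.
have := apply_irredp (fst (prim_mi pf)) _ h; rewrite size_XsubC => /(_ isT).
rewrite eqp_monic ?monicXsubC ?(snd (prim_mi pf)) // eq_sym polyC1.
by rewrite (negPf fX1).
Qed.

Lemma size_Fden : size (Fden n beta gamma f) = n.+1.
Proof.
rewrite Fden_Hh ?sf //; apply/eqP; rewrite eqn_leq; apply/andP; split.
  rewrite /Hh; apply: (big_ind (fun p : {poly F} => size p <= n.+1)%N).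
  - by rewrite size_poly0.
  - by move=> p r hp hr; apply: leq_trans (size_polyD _ _) _; rewrite geq_max hp hr.
  move=> i _; apply: leq_trans (size_scale_leq _ _) _.
  by have [-> _] := term_props (ltnSE (ltn_ord i)).
rewrite ltnNge; apply/negP => h; have := nth_default 0 h.
rewrite -/(_`_n) /Hh coef_sum => /eqP; apply/negP.
rewrite (eq_bigr (fun i : 'I_n.+1 => f`_i * 1 ^+ i)).
  by rewrite -horner_coef_wide ?sf // f1_neq0.
move=> i _; rewrite coefZ expr1n.
have [s m] := term_props (ltnSE (ltn_ord i)).
by move/monicP: m; rewrite lead_coefE s /= => ->.
Qed.
Lemma Fden_neq0 : Fden n beta gamma f != 0.
Proof. by rewrite -size_poly_gt0 size_Fden. Qed.

Lemma Fden_dvd_XQ : Fden n beta gamma f %| 'X^Q - 'X.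
Proof.
have s1 : (1 < size (Fden n beta gamma f))%N by rewrite size_Fden ltnS.
have [r [rI rD]] := exists_irr_factor s1.
have [sr rX] := Fden_part n1 Q2 bg sf pf fX1 rI rD.
have e : r %= Fden n beta gamma f.
  by rewrite -dvdp_size_eqp // eqn_leq (dvdp_leq Fden_neq0 rD) size_Fden sr.
by rewrite -(eqp_dvdl _ e).
Qed.

Lemma Fnum_sub : 'X^Q - 'X %| Fnum n Q beta gamma f - Fden n beta gamma f.
Proof.
rewrite Fden_Hh ?sf // /Fnum /Hh -sumrB.
apply: (big_ind (fun p : {poly F} => 'X^Q - 'X %| p)).
- exact: dvdp0.
- by move=> p r hp hr; apply: dvdp_add.
move=> i _; rewrite -scalerBr -mulrBl subrXX.
have -> : 'X^Q + beta%:P - ('X + beta%:P) = 'X^Q - 'X.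
  by rewrite opprD addrACA subrr addr0.
by rewrite -mul_polyC dvdp_mull // -mulrA dvdp_mulr.
Qed.

Lemma Fden_dvd : Fden n beta gamma f %| Fnum n Q beta gamma f.
Proof.
rewrite -(subrK (Fden n beta gamma f) (Fnum n Q beta gamma f)).
by apply: dvdp_add (dvdp_trans Fden_dvd_XQ Fnum_sub) (dvdpp _).
Qed.

Lemma fmon_top : f`_n = 1.
Proof.
have [_ fM] := prim_mi pf.
by move/monicP: fM; rewrite lead_coefE sf.
Qed.

Lemma Q_gt0 : (0 < Q)%N. Proof. exact: leq_trans Q2. Qed.

Lemma A_monic : A \is monic. Proof. exact: monicXnaddC Q_gt0. Qed.

Lemma size_Ai i : size (A ^+ i) = (Q * i).+1.
Proof.
have A0 : A ^+ i != 0 by rewrite monic_neq0 ?monic_exp ?A_monic.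
rewrite -[LHS]prednK ?size_poly_gt0 // size_exp.
have -> : (size A).-1 = Q; last by [].
rewrite size_polyDl ?size_polyXn // size_polyC.
by apply: leq_ltn_trans (leq_b1 _) _; rewrite ltnS Q_gt0.
Qed.

Lemma size_Fnum : size (Fnum n Q beta gamma f) = (n * Q).+1.
Proof.
rewrite /Fnum big_ord_recr /= subnn expr0 mulr1 fmon_top scale1r addrC.
rewrite size_polyDl size_Ai mulnC //.
rewrite ltnS; apply: (big_ind (fun p : {poly F} => size p <= n * Q)%N).
- by rewrite size_poly0.
- by move=> p r hp hr; apply: leq_trans (size_polyD _ _) _; rewrite geq_max hp hr.
move=> i _; apply: leq_trans (size_scale_leq _ _) _.
apply: leq_trans (size_polyMleq _ _) _.
rewrite size_Ai size_exp_XsubC addSn /=.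
have hi : (i < n)%N := ltn_ord i.
set k := (n - i)%N.
have ek : n = (i + k)%N by rewrite /k subnKC // ltnW.
have k1 : (1 <= k)%N by rewrite /k subn_gt0.
rewrite {3}ek mulnDl mulnC leq_add2l; apply: (@leq_trans (k * 2)).
  by rewrite muln2 -addnn -addn1 leq_add2l.
by rewrite leq_mul2l (ltnW Q2) orbT.
Qed.

End Top.

Lemma deriv_horner_sum (K : fieldType) (p : {poly K}) n y : (size p <= n.+1)%N ->
  \sum_(i < n.+1) p`_i * y ^+ i *+ i = y * p^`().[y].
Proof.
move=> sp.
have sd : (size p^`() <= n)%N.
  have [->|p0] := eqVneq p 0; first by rewrite deriv0 size_poly0.
  by rewrite -ltnS (leq_trans (lt_size_deriv p0) sp).
rewrite (horner_coef_wide _ sd) big_ord_recl /= mulr0n add0r mulr_sumr.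
apply: eq_bigr => i _; rewrite coef_deriv /bump /= add1n.
by rewrite -mulrnAl exprS mulrCA.
Qed.

Lemma dvdp_sq_deriv (F : fieldType) (g p : {poly F}) : g * g %| p -> g %| p^`().
Proof.
case/dvdpP => m ->; rewrite !derivM.
apply: dvdp_add; apply: dvdp_mull; first by apply: dvdp_mulr.
by apply: dvdp_add; [apply: dvdp_mull | apply: dvdp_mulr].
Qed.

Lemma deriv_big (F : fieldType) n (G : 'I_n -> {poly F}) :
  (\sum_(i < n) G i)^`() = \sum_(i < n) (G i)^`().
Proof. exact: (big_morph _ (@derivD _) (deriv0 _)). Qed.

Section Main.
Variables (F : finFieldType) (n : nat) (beta gamma : F) (f : {poly F}).
Hypotheses (n1 : (1 <= n)%N) (Q2 : (2 < #|F| ^ n)%N) (bg : beta != - gamma)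
  (sf : size f = n.+1) (pf : primitive_poly f) (fX1 : f != 'X - 1).
Variables (g : {poly F}) (hI : monic_irreducible_poly g).
Local Notation K := {poly %/ g with hI}.
Local Notation psi := (qev hI).
Local Notation iota := (qev hI \o polyC).
Local Notation Q := (#|F| ^ n)%N.
Local Notation w := (psi 'X).
Local Notation A := ('X^Q + beta%:P).
Local Notation B := ('X + beta%:P).
Local Notation C := ('X - gamma%:P).
Hypothesis gG : g %| Fnum n Q beta gamma f %/ Fden n beta gamma f.

Lemma main_deg : (n * (Q - 1) <= (size g).-1)%N.
Proof.
have eG := divpK (Fden_dvd n1 Q2 bg sf pf fX1).
have gN : g %| Hh f A C n.
  by rewrite -[Hh f A C n]/(Fnum n Q beta gamma f) -eG dvdp_mulr.
have hnum : psi (Hh f A C n) = 0 by apply/eqP; rewrite qev_eq0.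
have eA : psi A = w ^+ (#|F| ^ n) + iota beta by rewrite rmorphD rmorphXn.
have c0 : psi C != 0 := psiC_neq0 bg sf pf eA hnum.
set c := psi C in c0.
set y := psi A / c.
have fy : (map_poly iota f).[y] = 0 := y_root sf c0 hnum.
have yQ := root_expQ n1 Q2 sf pf fy.
have y1 := root_neq1 n1 sf pf fX1 fy.
have y0 := root_neq0 n1 Q2 sf pf fy.
have eyc : psi A = y * c by rewrite /y divfK.
have ec : c = w - iota gamma by rewrite /c rmorphB.
set x := x0 beta gamma y.
have xQ : x ^+ Q = x := x0_frob beta gamma yQ y1.
have xe : x * (y - 1) = iota beta + iota gamma * y := x0_eq beta gamma y1.
set z := w - x.
have z0 : z != 0.
  apply/eqP; rewrite /z => /eqP; rewrite subr_eq0 => /eqP hw.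
  have wQw : w ^+ Q = w by rewrite hw xQ.
  have eB : psi B = psi A by rewrite !rmorphD rmorphXn /= wQw.
  have hden : psi (Hh f B C n) = 0.
    by rewrite psi_H ?sf // /= eB -psi_H ?sf // hnum.
  have gD : g %| Fden n beta gamma f by rewrite Fden_Hh ?sf // -qev_eq0 hden.
  have gg : g * g %| Fnum n Q beta gamma f by rewrite -eG dvdp_mul.
  have hd : psi ((Fnum n Q beta gamma f)^`()) = 0.
    by apply/eqP; rewrite qev_eq0 dvdp_sq_deriv.
  have dA : A^`() = 0.
    by rewrite derivD derivXn derivC addr0 -mulr_natr natr_cardX0 // mulr0.
  have eD : (Fnum n Q beta gamma f)^`() =
      \sum_(i < n.+1) f`_i *: (A ^+ i * (C ^+ ((n - i).-1) *+ (n - i))).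
    rewrite /Fnum deriv_big; apply: eq_bigr => i _.
    by rewrite derivZ derivM !deriv_exp dA derivXsubC !mul0r mul0rn mul0r add0r mul1r.
  have hc : c * psi ((Fnum n Q beta gamma f)^`()) =
      c ^+ n * \sum_(i < n.+1) (iota f`_i * y ^+ i) *+ (n - i).
    rewrite eD rmorph_sum !mulr_sumr; apply: eq_bigr => i _.
    rewrite psi_scale rmorphM rmorphMn !rmorphXn /= eyc.
    have [e0|ne0] := eqVneq (n - i)%N 0%N; first by rewrite e0 !mulr0n !mulr0.
    rewrite !mulrnAr; congr (_ *+ _).
    rewrite -/c exprMn -mulrA -exprD [RHS]mulrC -[RHS]mulrA mulrCA; congr (_ * _).
    rewrite mulrCA -exprS -addnS prednK ?lt0n // subnKC //.
    by rewrite -ltnS ltn_ord.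
  have hs : \sum_(i < n.+1) (iota f`_i * y ^+ i) *+ (n - i) =
      - (y * (map_poly iota f)^`().[y]).
    rewrite (eq_bigr (fun i : 'I_n.+1 =>
      (iota f`_i * y ^+ i) *+ n - (iota f`_i * y ^+ i) *+ i)); last first.
      by move=> i _; rewrite mulrnBr // -ltnS.
    rewrite sumrB sumrMnl.
    have sm : (size (map_poly iota f) <= n.+1)%N by rewrite size_map_poly sf.
    have e1 : \sum_(i < n.+1) iota f`_i * y ^+ i = 0.
      by rewrite -[RHS]fy (horner_coef_wide _ sm); apply: eq_bigr => i _; rewrite coef_map.
    rewrite e1 mul0rn sub0r -(deriv_horner_sum _ sm).
    by congr (- _); apply: eq_bigr => i _; rewrite coef_map.
  move: hc; rewrite hd mulr0 hs => /eqP; rewrite eq_sym mulf_eq0 expf_eq0 (negPf c0).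
  rewrite andbF /= oppr_eq0 mulf_eq0 (negPf y0) /=.
  by rewrite (negPf (root_deriv n1 Q2 sf pf fy)).
have zQ : z ^+ Q = y * z.
  have wQ : w ^+ Q = y * c - iota beta by rewrite -eyc eA addrK.
  have xy : x * y = iota beta + iota gamma * y + x.
    by move/eqP: xe; rewrite mulrBr mulr1 subr_eq => /eqP.
  rewrite /z KfrobB xQ wQ ec [RHS]mulrBr [y * x]mulrC xy mulrBr !opprD !addrA.
  by rewrite [iota gamma * y]mulrC [_ - y * iota gamma - _]addrAC.
have zQk k : z ^+ (Q ^ k) = y ^+ k * z.
  elim: k => [|k IH]; first by rewrite expn0 expr1 expr0 mul1r.
  rewrite expnSr exprM IH exprMn zQ -exprM mulnC exprM yQ.
  by rewrite mulrA -exprSr.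
have nd := n_dvd n1 Q2 sf pf fy.
have [[sg _] _] := hI.
have d0 : (0 < (size g).-1)%N by rewrite -subn1 subn_gt0.
have /dvdnP [k ek] := nd.
have zd : z ^+ (#|F| ^ (size g).-1) = z by rewrite qev_frob.
move: zd; rewrite ek mulnC expnM zQk => /eqP.
rewrite -{2}[z]mul1r (inj_eq (mulIf z0)) => /eqP yk.
have k0 : (0 < k)%N by move: d0; rewrite ek muln_gt0 => /andP[].
by rewrite leq_mul2l (dvdn_leq k0 (root_ord n1 Q2 sf pf fy yk)) orbT.
Qed.

End Main.

Theorem mainTheorem10 (F : finFieldType) (n : nat) (beta gamma : F)
    (f : {poly F}) :
  (1 <= n)%N -> (2 < #|F| ^ n)%N -> beta != - gamma ->
  size f = n.+1 -> primitive_poly f -> f != 'X - 1 ->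
  let Q := (#|F| ^ n)%N in
  Fden n beta gamma f %| Fnum n Q beta gamma f /\
  irreducible_poly (Fnum n Q beta gamma f %/ Fden n beta gamma f) /\
  size (Fnum n Q beta gamma f %/ Fden n beta gamma f) = (n * (Q - 1)).+1.
Proof.
move=> n1 Q2 bg sf pf fX1 Q.
have D := Fden_dvd n1 Q2 bg sf pf fX1.
have D0 := Fden_neq0 beta gamma sf pf fX1.
have sG : size (Fnum n Q beta gamma f %/ Fden n beta gamma f) = (n * (Q - 1)).+1.
  rewrite size_divp // (size_Fnum beta gamma Q2 sf pf) (size_Fden beta gamma sf pf fX1) /=.
  by rewrite mulnBr muln1 subSn // leq_pmulr // (leq_trans _ Q2).
have sG1 : (1 < (n * (Q - 1)).+1)%N.
  by rewrite ltnS muln_gt0 n1 subn_gt0 (ltn_trans _ Q2).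
split => //; split => //; split; first by rewrite sG.
move=> r r1 rG.
have G0 : Fnum n Q beta gamma f %/ Fden n beta gamma f != 0.
  by rewrite -size_poly_gt0 sG.
have r0 : r != 0 by apply: contraNneq G0 => e; rewrite -dvd0p -e.
have sr : (1 < size r)%N by rewrite ltn_neqAle eq_sym r1 size_poly_gt0 r0.
have [g [gI gr]] := exists_irr_factor sr.
have gG := dvdp_trans gr rG.
have hd := main_deg n1 Q2 bg sf pf fX1 gI gG.
have g0 : g != 0 by apply: contraNneq r0 => e; rewrite -dvd0p -e.
rewrite -dvdp_size_eqp // eqn_leq (dvdp_leq G0 rG) /= sG.
apply: leq_trans (dvdp_leq r0 gr).
have sg0 : (0 < size g)%N by rewrite size_poly_gt0.
by rewrite -(prednK sg0) ltnS.
Qed.
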